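(* Let $N\cong\mathbb{Z}^3$, let $L\subset N_\mathbb{R}$ be a two-dimensional linear subspace, and let $T\subset L$ be a triangle with vertices in $N\cap L$ which is equivalent (under an isomorphism of lattices $\mathbb{Z}^2\to N\cap L$) to $\mathrm{conv}\{(1,0),(0,1),(-2,-1)\}$. Let $x\in N\setminus L$. Let $P$ be a minimal Fano polytope containing $T$ and the points $x$ and $-x$. Then, up to the action of $GL(3,\mathbb{Z})$, $P$ is the convex hull of the columns of one of $$\begin{pmatrix}1&0&0&0&-2\\0&1&0&0&-1\\0&0&1&-1&0\end{pmatrix}\quad\text{or}\quad\begin{pmatrix}1&0&-2&1&-1\\0&1&-1&1&-1\\0&0&0&2&-2\end{pmatrix}.$$
   Context: A Fano polytope is a three-dimensional convex polytope $P\subset N_\mathbb{R}$ with vertices in $N$ such that the origin is the only lattice point in the interior of $P$. It is minimal if, for every vertex $\rho$ of $P$, the polytope $\mathrm{conv}((P\cap N)\setminus\{\rho\})$ is not a Fano polytope. Polytopes are identified up to $GL(3,\mathbb{Z})$ (after choosing a basis of $N$). *)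

(* Defs.v *)
From Stdlib Require Import Reals ZArith List.
Open Scope R_scope.

(* Points of N_R = R^3 and of the lattice N = Z^3 (standard basis). *)
Record vec3 := V3 { c1 : R; c2 : R; c3 : R }.
Record pt := P3 { z1 : Z; z2 : Z; z3 : Z }.

Definition emb (p : pt) : vec3 := V3 (IZR (z1 p)) (IZR (z2 p)) (IZR (z3 p)).

Definition vadd (p q : vec3) : vec3 := V3 (c1 p + c1 q) (c2 p + c2 q) (c3 p + c3 q).
Definition vscale (a : R) (p : vec3) : vec3 := V3 (a * c1 p) (a * c2 p) (a * c3 p).
Definition vzero : vec3 := V3 0 0 0.

Definition zadd (p q : pt) : pt := P3 (z1 p + z1 q) (z2 p + z2 q) (z3 p + z3 q).
Definition zscale (a : Z) (p : pt) : pt := P3 (a * z1 p) (a * z2 p) (a * z3 p).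
Definition zopp (p : pt) : pt := zscale (-1)%Z p.

Definition region := vec3 -> Prop.
Definition same_set (A B : region) : Prop := forall p, A p <-> B p.
Definition subset (A B : region) : Prop := forall p, A p -> B p.

Definition latt (p : vec3) : Prop := exists z : pt, emb z = p.

Definition wsum (l : list (R * vec3)) : R := fold_right (fun wq acc => fst wq + acc) 0 l.
Definition csum (l : list (R * vec3)) : vec3 :=
  fold_right (fun wq acc => vadd (vscale (fst wq) (snd wq)) acc) vzero l.
Definition conv (S : region) : region := fun p =>
  exists l : list (R * vec3),
    Forall (fun wq => 0 <= fst wq /\ S (snd wq)) l /\ wsum l = 1 /\ csum l = p.

Definition ptset (V : list pt) : region := fun q => exists z, In z V /\ q = emb z.

Definition interior (P : region) (p : vec3) : Prop :=
  exists e, 0 < e /\ forall q,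
    Rabs (c1 q - c1 p) < e -> Rabs (c2 q - c2 p) < e -> Rabs (c3 q - c3 p) < e -> P q.

Definition lattice_polytope (P : region) : Prop :=
  exists V : list pt, same_set P (conv (ptset V)).

Definition vertex (P : region) (r : vec3) : Prop :=
  P r /\ forall a b t, P a -> P b -> 0 < t < 1 ->
    r = vadd (vscale t a) (vscale (1 - t) b) -> a = r /\ b = r.

Definition fano (P : region) : Prop :=
  lattice_polytope P /\
  (exists p, interior P p) /\              (* three-dimensional *)
  interior P vzero /\
  (forall p, latt p -> interior P p -> p = vzero).

Definition minimal_fano (P : region) : Prop :=
  fano P /\
  forall r, vertex P r -> ~ fano (conv (fun q => P q /\ latt q /\ q <> r)).

Record zmat := ZM { m11 : Z; m12 : Z; m13 : Z;
                    m21 : Z; m22 : Z; m23 : Z;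
                    m31 : Z; m32 : Z; m33 : Z }.
Definition zdet (A : zmat) : Z :=
  (m11 A * (m22 A * m33 A - m23 A * m32 A)
   - m12 A * (m21 A * m33 A - m23 A * m31 A)
   + m13 A * (m21 A * m32 A - m22 A * m31 A))%Z.
Definition in_GL3Z (A : zmat) : Prop := zdet A = 1%Z \/ zdet A = (-1)%Z.
Definition zapply (A : zmat) (p : pt) : pt :=
  P3 (m11 A * z1 p + m12 A * z2 p + m13 A * z3 p)
     (m21 A * z1 p + m22 A * z2 p + m23 A * z3 p)
     (m31 A * z1 p + m32 A * z2 p + m33 A * z3 p).

Definition inspan (u v p : vec3) : Prop :=
  exists a b : R, p = vadd (vscale a u) (vscale b v).
Definition lin_indep2 (u v : vec3) : Prop :=
  forall a b : R, vadd (vscale a u) (vscale b v) = vzero -> a = 0 /\ b = 0.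

(* (u, v) is a Z-basis of the lattice N ∩ L, where L = span_R(u, v) is
   two-dimensional; equivalently (1,0) |-> u, (0,1) |-> v is a lattice
   isomorphism Z^2 -> N ∩ L. *)
Definition basis_of_sublattice (u v : pt) : Prop :=
  lin_indep2 (emb u) (emb v) /\
  forall z : pt, inspan (emb u) (emb v) (emb z) ->
    exists m n : Z, z = zadd (zscale m u) (zscale n v).

Definition cols1 : list pt :=
  P3 1 0 0 :: P3 0 1 0 :: P3 0 0 1 :: P3 0 0 (-1) :: P3 (-2) (-1) 0 :: nil.
Definition cols2 : list pt :=
  P3 1 0 0 :: P3 0 1 0 :: P3 (-2) (-1) 0 :: P3 1 1 2 :: P3 (-1) (-1) (-2) :: nil.

(* Main.v *)
Require Import Defs.
From Stdlib Require Import Reals ZArith List.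
From Stdlib Require Import Lra Lia Classical Znumtheory.
Require Import Defs.
Open Scope R_scope.

Lemma vec3_ext (p q : vec3) : c1 p = c1 q -> c2 p = c2 q -> c3 p = c3 q -> p = q.
Proof. destruct p, q; simpl; intros; subst; reflexivity. Qed.

Ltac veq := apply vec3_ext; simpl.
Ltac fall := repeat (apply Forall_cons; [split; simpl; auto; try lra|]); apply Forall_nil.

Definition scal_l (a:R) (l: list (R*vec3)) := map (fun wq => (a * fst wq, snd wq)) l.

Lemma wsum_app l1 l2 : wsum (l1++l2) = wsum l1 + wsum l2.
Proof. induction l1; simpl; [ring| rewrite IHl1; ring]. Qed.
Lemma csum_app l1 l2 : csum (l1++l2) = vadd (csum l1) (csum l2).
Proof. induction l1; simpl. veq; ring. rewrite IHl1. veq; ring. Qed.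
Lemma wsum_scal a l : wsum (scal_l a l) = a * wsum l.
Proof. induction l; simpl; [ring| rewrite IHl; ring]. Qed.
Lemma csum_scal a l : csum (scal_l a l) = vscale a (csum l).
Proof. induction l; simpl. veq; ring. rewrite IHl. veq; ring. Qed.

Lemma conv_conv_aux (S : region) l :
  Forall (fun wq => 0 <= fst wq /\ conv S (snd wq)) l ->
  exists l', Forall (fun wq => 0 <= fst wq /\ S (snd wq)) l' /\ wsum l' = wsum l /\ csum l' = csum l.
Proof.
  induction l as [|[w s] l IH]; intros H.
  - exists nil; simpl; auto.
  - inversion H as [|? ? [Hw [ls [Hls [Hws Hcs]]]] Hl]; subst.
    destruct (IH Hl) as [l' [H1 [H2 H3]]].
    exists (scal_l w ls ++ l'). split; [|split].
    + apply Forall_app; split; auto.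
      rewrite Forall_forall in *. intros [a b] Hin. unfold scal_l in Hin.
      apply in_map_iff in Hin. destruct Hin as [[c d] [E Hin]]. simpl in E. inversion E; subst.
      destruct (Hls _ Hin) as [X Y]. simpl in *. split; auto. apply Rmult_le_pos; auto.
    + rewrite wsum_app, wsum_scal, Hws, H2. simpl. ring.
    + rewrite csum_app, csum_scal, Hcs, H3. reflexivity.
Qed.

Lemma conv_conv (S : region) p : conv (conv S) p -> conv S p.
Proof.
  intros [l [H1 [H2 H3]]]. destruct (conv_conv_aux S l H1) as [l' [A [B C]]].
  exists l'. split; auto. split; congruence.
Qed.

Lemma conv_mono (S T : region) : subset S T -> subset (conv S) (conv T).
Proof.
  intros HST p [l [H1 H2]]. exists l. split; auto.
  rewrite Forall_forall in *. intros x Hx. destruct (H1 x Hx); split; auto.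
Qed.

Lemma conv_incl (S : region) p : S p -> conv S p.
Proof.
  intros H. exists ((1,p)::nil). simpl. split; [constructor; [split; simpl; auto; lra | constructor]|].
  split; [ring|]. veq; ring.
Qed.

Lemma conv_ext (S T : region) : same_set S T -> same_set (conv S) (conv T).
Proof. intros H p; split; apply conv_mono; intros q; apply H. Qed.

Lemma conv2 (S : region) a b t : conv S a -> conv S b -> 0 <= t <= 1 ->
  conv S (vadd (vscale t a) (vscale (1-t) b)).
Proof.
  intros Ha Hb Ht. apply conv_conv. exists ((t,a)::(1-t,b)::nil). simpl.
  split. fall. split. ring. veq; ring.
Qed.

Lemma conv5 (S : region) p1 p2 p3 p4 p5 a1 a2 a3 a4 a5 q :
  S p1 -> S p2 -> S p3 -> S p4 -> S p5 ->
  0 <= a1 -> 0 <= a2 -> 0 <= a3 -> 0 <= a4 -> 0 <= a5 -> a1+a2+a3+a4+a5 = 1 ->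
  c1 q = a1 * c1 p1 + a2 * c1 p2 + a3 * c1 p3 + a4 * c1 p4 + a5 * c1 p5 ->
  c2 q = a1 * c2 p1 + a2 * c2 p2 + a3 * c2 p3 + a4 * c2 p4 + a5 * c2 p5 ->
  c3 q = a1 * c3 p1 + a2 * c3 p2 + a3 * c3 p3 + a4 * c3 p4 + a5 * c3 p5 ->
  conv S q.
Proof.
  intros. exists ((a1,p1)::(a2,p2)::(a3,p3)::(a4,p4)::(a5,p5)::nil). simpl.
  split. fall. split. lra.
  veq; lra.
Qed.

Definition rdet (p q r : vec3) : R :=
  c1 p*(c2 q*c3 r - c3 q*c2 r) - c2 p*(c1 q*c3 r - c3 q*c1 r) + c3 p*(c1 q*c2 r - c2 q*c1 r).

Lemma cramer1 p1 p2 p3 q :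
  c1 q * rdet p1 p2 p3 = rdet q p2 p3 * c1 p1 + rdet p1 q p3 * c1 p2 + rdet p1 p2 q * c1 p3.
Proof. unfold rdet; ring. Qed.
Lemma cramer2 p1 p2 p3 q :
  c2 q * rdet p1 p2 p3 = rdet q p2 p3 * c2 p1 + rdet p1 q p3 * c2 p2 + rdet p1 p2 q * c2 p3.
Proof. unfold rdet; ring. Qed.
Lemma cramer3 p1 p2 p3 q :
  c3 q * rdet p1 p2 p3 = rdet q p2 p3 * c3 p1 + rdet p1 q p3 * c3 p2 + rdet p1 p2 q * c3 p3.
Proof. unfold rdet; ring. Qed.

Lemma Rabs_le_between x d : Rabs x <= d -> -d <= x <= d.
Proof. intros H. split; [pose proof (Rle_abs (-x)) as H'; rewrite Rabs_Ropp in H'; lra | pose proof (Rle_abs x); lra]. Qed.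

Lemma lin_bound k1 k2 k3 q1 q2 q3 e : Rabs q1 < e -> Rabs q2 < e -> Rabs q3 < e ->
  Rabs (k1*q1 + k2*q2 + k3*q3) <= (Rabs k1 + Rabs k2 + Rabs k3) * e.
Proof.
  intros H1 H2 H3.
  eapply Rle_trans. apply Rabs_triang. eapply Rle_trans.
  apply Rplus_le_compat_r. apply Rabs_triang. rewrite !Rabs_mult.
  assert (Rabs k1 * Rabs q1 <= Rabs k1 * e) by (apply Rmult_le_compat_l; [apply Rabs_pos|lra]).
  assert (Rabs k2 * Rabs q2 <= Rabs k2 * e) by (apply Rmult_le_compat_l; [apply Rabs_pos|lra]).
  assert (Rabs k3 * Rabs q3 <= Rabs k3 * e) by (apply Rmult_le_compat_l; [apply Rabs_pos|lra]).
  lra.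
Qed.

Lemma beta_bound (L : R) k1 k2 k3 q1 q2 q3 e K D d :
  L = k1*q1 + k2*q2 + k3*q3 -> Rabs q1 < e -> Rabs q2 < e -> Rabs q3 < e ->
  Rabs k1 + Rabs k2 + Rabs k3 <= K -> D <> 0 -> 0 <= e -> K * e = d * Rabs D ->
  Rabs (L / D) <= d.
Proof.
  intros HL H1 H2 H3 HK HD He HKe.
  assert (Hb := lin_bound k1 k2 k3 q1 q2 q3 e H1 H2 H3). rewrite <- HL in Hb.
  assert (Rabs L <= K * e) by (eapply Rle_trans; [apply Hb| apply Rmult_le_compat_r; lra]).
  assert (0 < Rabs D) by (apply Rabs_pos_lt; auto).
  unfold Rdiv. rewrite Rabs_mult, Rabs_inv.
  apply (Rmult_le_reg_r (Rabs D)); auto. rewrite Rmult_assoc, Rinv_l by lra. lra.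
Qed.

Lemma G5 (S : region) (HS : forall p, conv S p -> S p) p1 p2 p3 p4 p5 m1 m2 m3 m4 m5 :
  S p1 -> S p2 -> S p3 -> S p4 -> S p5 ->
  0 < m1 -> 0 < m2 -> 0 < m3 -> 0 < m4 -> 0 < m5 ->
  m1 * c1 p1 + m2 * c1 p2 + m3 * c1 p3 + m4 * c1 p4 + m5 * c1 p5 = 0 ->
  m1 * c2 p1 + m2 * c2 p2 + m3 * c2 p3 + m4 * c2 p4 + m5 * c2 p5 = 0 ->
  m1 * c3 p1 + m2 * c3 p2 + m3 * c3 p3 + m4 * c3 p4 + m5 * c3 p5 = 0 ->
  rdet p1 p2 p3 <> 0 -> interior S vzero.
Proof.
  intros S1 S2 S3 S4 S5 M1 M2 M3 M4 M5 R1 R2 R3 HD.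
  set (D := rdet p1 p2 p3) in *.
  set (M := m1+m2+m3+m4+m5).
  assert (HM : 0 < M) by (unfold M; lra).
  set (d := Rmin (1/6) (Rmin (m1/(2*M)) (Rmin (m2/(2*M)) (m3/(2*M))))).
  assert (Hd1 : d <= 1/6) by apply Rmin_l.
  assert (Hd2 : d <= m1/(2*M)) by (eapply Rle_trans; [apply Rmin_r| apply Rmin_l]).
  assert (Hd3 : d <= m2/(2*M)) by (eapply Rle_trans; [apply Rmin_r| eapply Rle_trans; [apply Rmin_r|apply Rmin_l]]).
  assert (Hd4 : d <= m3/(2*M)) by (eapply Rle_trans; [apply Rmin_r| eapply Rle_trans; [apply Rmin_r|apply Rmin_r]]).
  assert (Hdp : 0 < d).
  { unfold d. repeat apply Rmin_glb_lt; try lra; apply Rdiv_lt_0_compat; lra. }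
  set (A1 := c2 p2*c3 p3 - c3 p2*c2 p3). set (A2 := -(c1 p2*c3 p3 - c3 p2*c1 p3)).
  set (A3 := c1 p2*c2 p3 - c2 p2*c1 p3).
  set (B1 := -(c2 p1*c3 p3) + c3 p1*c2 p3). set (B2 := c1 p1*c3 p3 - c3 p1*c1 p3).
  set (B3 := -(c1 p1*c2 p3) + c2 p1*c1 p3).
  set (C1 := c2 p1*c3 p2 - c3 p1*c2 p2). set (C2 := -(c1 p1*c3 p2 - c3 p1*c1 p2)).
  set (C3 := c1 p1*c2 p2 - c2 p1*c1 p2).
  set (K := 1 + (Rabs A1 + Rabs A2 + Rabs A3) + (Rabs B1 + Rabs B2 + Rabs B3) + (Rabs C1 + Rabs C2 + Rabs C3)).
  assert (HK : 0 < K) by (unfold K; pose proof (Rabs_pos A1); pose proof (Rabs_pos A2); pose proof (Rabs_pos A3);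
    pose proof (Rabs_pos B1); pose proof (Rabs_pos B2); pose proof (Rabs_pos B3);
    pose proof (Rabs_pos C1); pose proof (Rabs_pos C2); pose proof (Rabs_pos C3); lra).
  assert (HDp : 0 < Rabs D) by (apply Rabs_pos_lt; auto).
  exists (d * Rabs D / K). split. apply Rdiv_lt_0_compat; auto. apply Rmult_lt_0_compat; auto.
  intros q Q1 Q2 Q3. simpl in Q1, Q2, Q3. rewrite Rminus_0_r in Q1, Q2, Q3.
  set (e := d * Rabs D / K) in *.
  assert (He : 0 <= e) by (unfold e; apply Rlt_le, Rdiv_lt_0_compat; auto; apply Rmult_lt_0_compat; auto).
  assert (HKe : K * e = d * Rabs D) by (unfold e; field; lra).
  pose proof (Rabs_pos A1); pose proof (Rabs_pos A2); pose proof (Rabs_pos A3);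
    pose proof (Rabs_pos B1); pose proof (Rabs_pos B2); pose proof (Rabs_pos B3);
    pose proof (Rabs_pos C1); pose proof (Rabs_pos C2); pose proof (Rabs_pos C3).
  set (b1 := rdet q p2 p3 / D). set (b2 := rdet p1 q p3 / D). set (b3 := rdet p1 p2 q / D).
  assert (Hb1 : Rabs b1 <= d).
  { apply (beta_bound _ A1 A2 A3 (c1 q) (c2 q) (c3 q) e K); auto.
    unfold A1, A2, A3, rdet; ring. unfold K; lra. }
  assert (Hb2 : Rabs b2 <= d).
  { apply (beta_bound _ B1 B2 B3 (c1 q) (c2 q) (c3 q) e K); auto.
    unfold B1, B2, B3, rdet; ring. unfold K; lra. }
  assert (Hb3 : Rabs b3 <= d).
  { apply (beta_bound _ C1 C2 C3 (c1 q) (c2 q) (c3 q) e K); auto.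
    unfold C1, C2, C3, rdet; ring. unfold K; lra. }
  apply Rabs_le_between in Hb1, Hb2, Hb3.
  set (c := (1 - (b1+b2+b3))/M).
  assert (Hc : 1/(2*M) <= c).
  { unfold c. replace (1/(2*M)) with ((1/2)/M) by (field; lra).
    unfold Rdiv. apply Rmult_le_compat_r. left; apply Rinv_0_lt_compat; lra. lra. }
  assert (Hc0 : 0 < 1/(2*M)) by (apply Rdiv_lt_0_compat; lra).
  assert (E1 : m1/(2*M) <= c*m1) by (replace (m1/(2*M)) with (1/(2*M)*m1) by (field; lra);
     apply Rmult_le_compat_r; lra).
  assert (E2 : m2/(2*M) <= c*m2) by (replace (m2/(2*M)) with (1/(2*M)*m2) by (field; lra);
     apply Rmult_le_compat_r; lra).
  assert (E3 : m3/(2*M) <= c*m3) by (replace (m3/(2*M)) with (1/(2*M)*m3) by (field; lra);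
     apply Rmult_le_compat_r; lra).
  assert (E4 : 0 < c*m4) by (apply Rmult_lt_0_compat; lra).
  assert (E5 : 0 < c*m5) by (apply Rmult_lt_0_compat; lra).
  apply HS. apply (conv5 S p1 p2 p3 p4 p5 (b1 + c*m1) (b2 + c*m2) (b3+c*m3) (c*m4) (c*m5)); auto; try lra.
  - unfold c, M. field. lra.
  - transitivity (b1 * c1 p1 + b2 * c1 p2 + b3 * c1 p3 + c * (m1 * c1 p1 + m2 * c1 p2 + m3 * c1 p3 + m4 * c1 p4 + m5 * c1 p5)).
    rewrite R1, Rmult_0_r, Rplus_0_r. unfold b1, b2, b3.
    apply (Rmult_eq_reg_r D); auto. pose proof (cramer1 p1 p2 p3 q) as Cr; fold D in Cr; rewrite Cr. field; auto. ring.
  - transitivity (b1 * c2 p1 + b2 * c2 p2 + b3 * c2 p3 + c * (m1 * c2 p1 + m2 * c2 p2 + m3 * c2 p3 + m4 * c2 p4 + m5 * c2 p5)).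
    rewrite R2, Rmult_0_r, Rplus_0_r. unfold b1, b2, b3.
    apply (Rmult_eq_reg_r D); auto. pose proof (cramer2 p1 p2 p3 q) as Cr; fold D in Cr; rewrite Cr. field; auto. ring.
  - transitivity (b1 * c3 p1 + b2 * c3 p2 + b3 * c3 p3 + c * (m1 * c3 p1 + m2 * c3 p2 + m3 * c3 p3 + m4 * c3 p4 + m5 * c3 p5)).
    rewrite R3, Rmult_0_r, Rplus_0_r. unfold b1, b2, b3.
    apply (Rmult_eq_reg_r D); auto. pose proof (cramer3 p1 p2 p3 q) as Cr; fold D in Cr; rewrite Cr. field; auto. ring.
Qed.

Ltac zcast := repeat rewrite ?plus_IZR, ?minus_IZR, ?mult_IZR, ?opp_IZR.
Ltac zcastH H := repeat rewrite ?plus_IZR, ?minus_IZR, ?mult_IZR, ?opp_IZR in H.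

Definition zdet3 (p q r : pt) : Z :=
  (z1 p*(z2 q*z3 r - z3 q*z2 r) - z2 p*(z1 q*z3 r - z3 q*z1 r) + z3 p*(z1 q*z2 r - z2 q*z1 r))%Z.

Lemma rdet_emb p q r : rdet (emb p) (emb q) (emb r) = IZR (zdet3 p q r).
Proof. unfold rdet, zdet3, emb; simpl. zcast. ring. Qed.

Lemma pt_ext (p q : pt) : z1 p = z1 q -> z2 p = z2 q -> z3 p = z3 q -> p = q.
Proof. destruct p, q; simpl; intros; subst; reflexivity. Qed.

Lemma emb_inj p q : emb p = emb q -> p = q.
Proof.
  intros H. unfold emb in H. injection H; intros. apply pt_ext; apply eq_IZR; auto.
Qed.

Lemma emb_neq_det u v p q : zdet3 u v p <> zdet3 u v q -> emb p <> emb q.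
Proof. intros H E. apply emb_inj in E. subst. auto. Qed.

Lemma pt_eq_dec (p q : pt) : {p = q} + {p <> q}.
Proof. decide equality; apply Z.eq_dec. Qed.

Definition zlin (m : Z) (u : pt) (n : Z) (v : pt) : pt := zadd (zscale m u) (zscale n v).

Lemma zdet3_lin_r u v p q a b :
  zdet3 u v (zadd (zscale a p) (zscale b q)) = (a * zdet3 u v p + b * zdet3 u v q)%Z.
Proof. unfold zdet3; simpl; ring. Qed.

Lemma div_core u v (g a b : Z) : basis_of_sublattice u v ->
  (g | a * z1 u + b * z1 v)%Z -> (g | a * z2 u + b * z2 v)%Z -> (g | a * z3 u + b * z3 v)%Z ->
  (g | a)%Z /\ (g | b)%Z.
Proof.
  intros [Hind Hsp] [k1 E1] [k2 E2] [k3 E3].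
  destruct (Z.eq_dec g 0) as [G0|G0].
  - subst g. rewrite Z.mul_0_r in E1, E2, E3.
    destruct (Hind (IZR a) (IZR b)) as [A B].
    { veq; unfold emb; simpl. 
      apply (f_equal IZR) in E1; zcastH E1; lra.
      apply (f_equal IZR) in E2; zcastH E2; lra.
      apply (f_equal IZR) in E3; zcastH E3; lra. }
    apply eq_IZR in A; apply eq_IZR in B; subst. split; exists 0%Z; ring.
  - destruct (Hsp (P3 k1 k2 k3)) as [m [n Hmn]].
    { exists (IZR a / IZR g), (IZR b / IZR g).
      assert (IZR g <> 0) by (intro X; apply eq_IZR in X; auto).
      unfold emb; veq.
      apply (f_equal IZR) in E1; zcastH E1; replace (IZR k1) with (IZR k1 * IZR g / IZR g) by (field; auto); rewrite <- E1; field; auto.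
      apply (f_equal IZR) in E2; zcastH E2; replace (IZR k2) with (IZR k2 * IZR g / IZR g) by (field; auto); rewrite <- E2; field; auto.
      apply (f_equal IZR) in E3; zcastH E3; replace (IZR k3) with (IZR k3 * IZR g / IZR g) by (field; auto); rewrite <- E3; field; auto. }
    unfold zadd, zscale in Hmn. injection Hmn; intros F3 F2 F1.
    destruct (Hind (IZR (a - g*m)) (IZR (b - g*n))) as [A B].
    { unfold emb; veq.
      - apply (f_equal IZR) in E1. rewrite F1 in E1. zcastH E1. zcast. lra.
      - apply (f_equal IZR) in E2. rewrite F2 in E2. zcastH E2. zcast. lra.
      - apply (f_equal IZR) in E3. rewrite F3 in E3. zcastH E3. zcast. lra. }
    apply eq_IZR in A; apply eq_IZR in B. split; [exists m|exists n]; lia.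
Qed.

Definition zc1 u v := (z2 u*z3 v - z3 u*z2 v)%Z.
Definition zc2 u v := (z3 u*z1 v - z1 u*z3 v)%Z.
Definition zc3 u v := (z1 u*z2 v - z2 u*z1 v)%Z.

Lemma zdet3_cross u v y : zdet3 u v y = (zc1 u v * z1 y + zc2 u v * z2 y + zc3 u v * z3 y)%Z.
Proof. unfold zdet3, zc1, zc2, zc3; ring. Qed.

Lemma key_div u v g : basis_of_sublattice u v ->
  (g | zc1 u v)%Z -> (g | zc2 u v)%Z -> (g | zc3 u v)%Z -> g = 1%Z \/ g = (-1)%Z.
Proof.
  intros Hb H1 H2 H3.
  destruct (classic ((g | z1 u) /\ (g | z2 u) /\ (g | z3 u))%Z) as [[A [B C]]|N].
  - destruct (div_core u v g 1 0 Hb) as [X _].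
    + replace (1 * z1 u + 0 * z1 v)%Z with (z1 u) by ring; auto.
    + replace (1 * z2 u + 0 * z2 v)%Z with (z2 u) by ring; auto.
    + replace (1 * z3 u + 0 * z3 v)%Z with (z3 u) by ring; auto.
    + apply Z.divide_1_r in X. lia.
  - exfalso. apply N.
    assert (Hd : forall x, (g | x)%Z -> (g | - x)%Z) by (intros; apply Z.divide_opp_r; auto).
    assert (Hz : (g | 0)%Z) by apply Z.divide_0_r.
    repeat split; apply NNPP; intro N1.
    + destruct (div_core u v g (z1 v) (- z1 u) Hb) as [_ X].
      * replace (z1 v * z1 u + - z1 u * z1 v)%Z with 0%Z by ring; auto.
      * replace (z1 v * z2 u + - z1 u * z2 v)%Z with (- zc3 u v)%Z by (unfold zc3; ring); auto.
      * replace (z1 v * z3 u + - z1 u * z3 v)%Z with (zc2 u v)%Z by (unfold zc2; ring); auto.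
      * apply N1. apply (proj1 (Z.divide_opp_r _ _)) in X. auto.
    + destruct (div_core u v g (z2 v) (- z2 u) Hb) as [_ X].
      * replace (z2 v * z1 u + - z2 u * z1 v)%Z with (zc3 u v) by (unfold zc3; ring); auto.
      * replace (z2 v * z2 u + - z2 u * z2 v)%Z with 0%Z by ring; auto.
      * replace (z2 v * z3 u + - z2 u * z3 v)%Z with (- zc1 u v)%Z by (unfold zc1; ring); auto.
      * apply N1. apply (proj1 (Z.divide_opp_r _ _)) in X. auto.
    + destruct (div_core u v g (z3 v) (- z3 u) Hb) as [_ X].
      * replace (z3 v * z1 u + - z3 u * z1 v)%Z with (- zc2 u v)%Z by (unfold zc2; ring); auto.
      * replace (z3 v * z2 u + - z3 u * z2 v)%Z with (zc1 u v) by (unfold zc1; ring); auto.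
      * replace (z3 v * z3 u + - z3 u * z3 v)%Z with 0%Z by ring; auto.
      * apply N1. apply (proj1 (Z.divide_opp_r _ _)) in X. auto.
Qed.

Lemma z0_exists u v : basis_of_sublattice u v -> exists z0, zdet3 u v z0 = 1%Z.
Proof.
  intros Hb.
  set (g := Z.gcd (zc1 u v) (Z.gcd (zc2 u v) (zc3 u v))).
  assert (Hg : g = 1%Z).
  { assert (0 <= g)%Z by apply Z.gcd_nonneg.
    destruct (key_div u v g Hb); try lia.
    - apply Z.gcd_divide_l.
    - eapply Z.divide_trans; [apply Z.gcd_divide_r| apply Z.gcd_divide_l].
    - eapply Z.divide_trans; [apply Z.gcd_divide_r| apply Z.gcd_divide_r]. }
  destruct (Zis_gcd_bezout _ _ _ (Zgcd_is_gcd (zc1 u v) (Z.gcd (zc2 u v) (zc3 u v)))) as [k1 k E].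
  destruct (Zis_gcd_bezout _ _ _ (Zgcd_is_gcd (zc2 u v) (zc3 u v))) as [k2 k3 E'].
  exists (P3 k1 (k*k2) (k*k3)). rewrite zdet3_cross. simpl. fold g in E. rewrite Hg in E.
  rewrite <- E' in E. rewrite <- E. ring.
Qed.

Lemma span_from_det0 u v y : basis_of_sublattice u v -> zdet3 u v y = 0%Z ->
  exists m n, y = zlin m u n v.
Proof.
  intros Hb Hd. destruct Hb as [Hind Hsp]. apply Hsp.
  assert (Hnz : zc1 u v <> 0%Z \/ zc2 u v <> 0%Z \/ zc3 u v <> 0%Z).
  { apply NNPP; intro N. destruct (key_div u v 0 (conj Hind Hsp)); try lia;
      [exists 0%Z | exists 0%Z | exists 0%Z]; lia. }
  assert (HD : IZR (zdet3 u v y) = 0) by (rewrite Hd; reflexivity).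
  unfold zdet3 in HD; zcastH HD.
  destruct Hnz as [H1|[H2|H3]].
  - assert (Hc : IZR (z2 u) * IZR (z3 v) - IZR (z3 u) * IZR (z2 v) <> 0)
      by (intro X; apply H1; apply eq_IZR; unfold zc1; zcast; lra).
    exists ((IZR (z2 y) * IZR (z3 v) - IZR (z3 y) * IZR (z2 v)) / (IZR (z2 u) * IZR (z3 v) - IZR (z3 u) * IZR (z2 v))),
           ((IZR (z2 u) * IZR (z3 y) - IZR (z3 u) * IZR (z2 y)) / (IZR (z2 u) * IZR (z3 v) - IZR (z3 u) * IZR (z2 v))).
    unfold emb; veq; [|field; auto|field; auto].
    apply Rminus_diag_uniq.
    match goal with |- ?a - ?b = 0 => replace (a - b) with
      ((IZR (z1 u) * (IZR (z2 v) * IZR (z3 y) - IZR (z3 v) * IZR (z2 y)) -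
       IZR (z2 u) * (IZR (z1 v) * IZR (z3 y) - IZR (z3 v) * IZR (z1 y)) +
       IZR (z3 u) * (IZR (z1 v) * IZR (z2 y) - IZR (z2 v) * IZR (z1 y))) / (IZR (z2 u) * IZR (z3 v) - IZR (z3 u) * IZR (z2 v))) by (field; auto) end.
    rewrite HD. unfold Rdiv; ring.
  - assert (Hc : IZR (z3 u) * IZR (z1 v) - IZR (z1 u) * IZR (z3 v) <> 0)
      by (intro X; apply H2; apply eq_IZR; unfold zc2; zcast; lra).
    exists ((IZR (z3 y) * IZR (z1 v) - IZR (z1 y) * IZR (z3 v)) / (IZR (z3 u) * IZR (z1 v) - IZR (z1 u) * IZR (z3 v))),
           ((IZR (z3 u) * IZR (z1 y) - IZR (z1 u) * IZR (z3 y)) / (IZR (z3 u) * IZR (z1 v) - IZR (z1 u) * IZR (z3 v))).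
    unfold emb; veq; [field; auto| |field; auto].
    apply Rminus_diag_uniq.
    match goal with |- ?a - ?b = 0 => replace (a - b) with
      ((IZR (z1 u) * (IZR (z2 v) * IZR (z3 y) - IZR (z3 v) * IZR (z2 y)) -
       IZR (z2 u) * (IZR (z1 v) * IZR (z3 y) - IZR (z3 v) * IZR (z1 y)) +
       IZR (z3 u) * (IZR (z1 v) * IZR (z2 y) - IZR (z2 v) * IZR (z1 y))) / (IZR (z3 u) * IZR (z1 v) - IZR (z1 u) * IZR (z3 v))) by (field; auto) end.
    rewrite HD. unfold Rdiv; ring.
  - assert (Hc : IZR (z1 u) * IZR (z2 v) - IZR (z2 u) * IZR (z1 v) <> 0)
      by (intro X; apply H3; apply eq_IZR; unfold zc3; zcast; lra).
    exists ((IZR (z1 y) * IZR (z2 v) - IZR (z2 y) * IZR (z1 v)) / (IZR (z1 u) * IZR (z2 v) - IZR (z2 u) * IZR (z1 v))),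
           ((IZR (z1 u) * IZR (z2 y) - IZR (z2 u) * IZR (z1 y)) / (IZR (z1 u) * IZR (z2 v) - IZR (z2 u) * IZR (z1 v))).
    unfold emb; veq; [field; auto|field; auto|].
    apply Rminus_diag_uniq.
    match goal with |- ?a - ?b = 0 => replace (a - b) with
      ((IZR (z1 u) * (IZR (z2 v) * IZR (z3 y) - IZR (z3 v) * IZR (z2 y)) -
       IZR (z2 u) * (IZR (z1 v) * IZR (z3 y) - IZR (z3 v) * IZR (z1 y)) +
       IZR (z3 u) * (IZR (z1 v) * IZR (z2 y) - IZR (z2 v) * IZR (z1 y))) / (IZR (z1 u) * IZR (z2 v) - IZR (z2 u) * IZR (z1 v))) by (field; auto) end.
    rewrite HD. unfold Rdiv; ring.
Qed.

Lemma zdet3_add_scale u v y z c : zdet3 u v (zadd y (zscale c z)) = (zdet3 u v y + c * zdet3 u v z)%Z.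
Proof. unfold zdet3; simpl; ring. Qed.

Lemma coords u v z0 y : basis_of_sublattice u v -> zdet3 u v z0 = 1%Z ->
  exists m n, y = zadd (zlin m u n v) (zscale (zdet3 u v y) z0).
Proof.
  intros Hb Hz. destruct (span_from_det0 u v (zadd y (zscale (- zdet3 u v y) z0)) Hb) as [m [n E]].
  { rewrite zdet3_add_scale, Hz. ring. }
  exists m, n. rewrite <- E. apply pt_ext; simpl; ring.
Qed.

Definition rem (V : list pt) (z : pt) := filter (fun z' => if pt_eq_dec z' z then false else true) V.

Lemma ptset_rem V z q : ptset (rem V z) q <-> ptset V q /\ q <> emb z.
Proof.
  unfold ptset, rem. split.
  - intros [z' [Hin E]]. apply filter_In in Hin. destruct Hin as [Hin Hf].
    destruct (pt_eq_dec z' z); try discriminate. split; [exists z'; auto|].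
    subst. intro X. apply emb_inj in X. auto.
  - intros [[z' [Hin E]] N]. exists z'. split; auto. apply filter_In. split; auto.
    destruct (pt_eq_dec z' z); auto. subst. contradiction.
Qed.

Lemma length_rem V z : In z V -> (length (rem V z) < length V)%nat.
Proof.
  unfold rem. induction V as [|a V IH]; simpl; [tauto|]. intros [E|H].
  - subst. destruct (pt_eq_dec z z); [|congruence].
    pose proof (filter_length_le (fun z' => if pt_eq_dec z' z then false else true) V). lia.
  - destruct (pt_eq_dec a z); simpl.
    + pose proof (filter_length_le (fun z' => if pt_eq_dec z' z then false else true) V). lia.
    + specialize (IH H). lia.
Qed.

Lemma decomp (S : region) (r : vec3) (l : list (R*vec3)) :
  Forall (fun wq => 0 <= fst wq /\ S (snd wq)) l ->
  exists al be p', 0 <= al /\ 0 <= be /\ (be = 0 \/ conv (fun q => S q /\ q <> r) p') /\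
    al + be = wsum l /\ csum l = vadd (vscale al r) (vscale be p').
Proof.
  induction l as [|[w s] l IH]; intros H.
  - exists 0, 0, vzero. simpl. repeat split; auto; try lra. veq; ring.
  - inversion H as [|? ? [Hw Hs] Hl]; subst. simpl in Hw, Hs.
    destruct (IH Hl) as [al [be [p' [Ha [Hb [Hc [Hd He]]]]]]].
    simpl. rewrite He.
    destruct (classic (s = r)) as [Esr|Nsr].
    + subst s. exists (al + w), be, p'. repeat split; auto; try lra. veq; ring.
    + destruct Hc as [Hc|Hc].
      * subst be. exists al, w, s. repeat split; auto; try lra.
        right. apply conv_incl. split; auto. veq; ring.
      * destruct (Req_dec (be + w) 0) as [Z|NZ].
        { assert (be = 0) by lra. assert (w = 0) by lra. subst.
          exists al, 0, p'. repeat split; auto; try lra. veq; ring. }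
        exists al, (be + w), (vadd (vscale (be/(be+w)) p') (vscale (1 - be/(be+w)) s)).
        repeat split; auto; try lra.
        -- right. apply conv2; auto. apply conv_incl; split; auto.
           split. apply Rmult_le_pos; auto. left; apply Rinv_0_lt_compat; lra.
           apply (Rmult_le_reg_r (be+w)). lra. unfold Rdiv. rewrite Rmult_assoc, Rinv_l; lra.
        -- veq; field; auto.
Qed.

Lemma comb_solve t aa ba ab bb r a b a' b' :
  aa + ba = 1 -> ab + bb = 1 ->
  r = t * a + (1-t) * b -> a = aa * r + ba * a' -> b = ab * r + bb * b' ->
  r * (t*ba + (1-t)*bb) = t*ba*a' + (1-t)*bb*b'.
Proof.
  intros H0 H1 H2 H3 H4. rewrite H3, H4 in H2.
  replace aa with (1-ba) in H2 by lra. replace ab with (1-bb) in H2 by lra.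
  apply Rminus_diag_uniq.
  transitivity (r - (t * ((1-ba)*r + ba*a') + (1-t)*((1-bb)*r+bb*b'))). ring.
  rewrite <- H2. ring.
Qed.

Lemma nonvertex_in (S : region) r :
  conv S r -> ~ vertex (conv S) r -> conv (fun q => S q /\ q <> r) r.
Proof.
  intros Hr Hv.
  destruct (classic (exists a b t, conv S a /\ conv S b /\ 0 < t < 1 /\
      r = vadd (vscale t a) (vscale (1 - t) b) /\ ~ (a = r /\ b = r))) as [E|NE].
  2:{ exfalso. apply Hv. split; auto. intros a b t Ha Hb Ht He. apply NNPP; intro X.
      apply NE. exists a, b, t. auto. }
  destruct E as [a [b [t [Ha [Hb [Ht [He Hn]]]]]]].
  destruct Ha as [la [Fa [Wa Ca]]]. destruct Hb as [lb [Fb [Wb Cb]]].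
  destruct (decomp S r la Fa) as [aa [ba [a' [Haa [Hba [Ha' [Sa Ea]]]]]]].
  destruct (decomp S r lb Fb) as [ab [bb [b' [Hab [Hbb [Hb' [Sb Eb]]]]]]].
  rewrite Wa in Sa. rewrite Wb in Sb. rewrite Ca in Ea. rewrite Cb in Eb.
  assert (K1 : c1 r * (t*ba + (1-t)*bb) = t*ba*c1 a' + (1-t)*bb*c1 b').
  { apply (comb_solve t aa ba ab bb _ (c1 a) (c1 b)); auto.
    rewrite He at 1; reflexivity. rewrite Ea; reflexivity. rewrite Eb; reflexivity. }
  assert (K2 : c2 r * (t*ba + (1-t)*bb) = t*ba*c2 a' + (1-t)*bb*c2 b').
  { apply (comb_solve t aa ba ab bb _ (c2 a) (c2 b)); auto.
    rewrite He at 1; reflexivity. rewrite Ea; reflexivity. rewrite Eb; reflexivity. }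
  assert (K3 : c3 r * (t*ba + (1-t)*bb) = t*ba*c3 a' + (1-t)*bb*c3 b').
  { apply (comb_solve t aa ba ab bb _ (c3 a) (c3 b)); auto.
    rewrite He at 1; reflexivity. rewrite Ea; reflexivity. rewrite Eb; reflexivity. }
  set (R' := fun q => S q /\ q <> r) in *.
  destruct (Req_dec ba 0) as [Za|Na]; destruct (Req_dec bb 0) as [Zb|Nb].
  - exfalso. apply Hn. subst ba bb. split; [rewrite Ea|rewrite Eb]; veq; 
      replace aa with 1 by lra; replace ab with 1 by lra; ring.
  - destruct Hb' as [X|Hb']; [contradiction|].
    assert (E : b' = r); [|rewrite <- E; auto]. subst ba.
    assert (0 < (1-t)*bb) by (apply Rmult_lt_0_compat; lra).
    veq; [apply (Rmult_eq_reg_r ((1-t)*bb))|apply (Rmult_eq_reg_r ((1-t)*bb))|apply (Rmult_eq_reg_r ((1-t)*bb))]; try lra.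
  - destruct Ha' as [X|Ha']; [contradiction|].
    assert (E : a' = r); [|rewrite <- E; auto]. subst bb.
    assert (0 < t*ba) by (apply Rmult_lt_0_compat; lra).
    veq; [apply (Rmult_eq_reg_r (t*ba))|apply (Rmult_eq_reg_r (t*ba))|apply (Rmult_eq_reg_r (t*ba))]; try lra.
  - destruct Ha' as [X|Ha']; [contradiction|]. destruct Hb' as [X|Hb']; [contradiction|].
    assert (0 < t*ba) by (apply Rmult_lt_0_compat; lra).
    assert (0 < (1-t)*bb) by (apply Rmult_lt_0_compat; lra).
    set (g := t*ba + (1-t)*bb) in *.
    replace r with (vadd (vscale (t*ba/g) a') (vscale (1 - t*ba/g) b')).
    + apply conv2; auto. split. apply Rmult_le_pos; [lra| left; apply Rinv_0_lt_compat; unfold g; lra].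
      apply (Rmult_le_reg_r g). unfold g; lra. unfold Rdiv. rewrite Rmult_assoc, Rinv_l by (unfold g; lra). unfold g; lra.
    + veq; [apply (Rmult_eq_reg_r g)|apply (Rmult_eq_reg_r g)|apply (Rmult_eq_reg_r g)]; try (unfold g; lra);
      [rewrite K1|rewrite K2|rewrite K3]; unfold g; field; lra.
Qed.

Lemma min_list (P : region) V : same_set P (conv (ptset V)) ->
  exists V0, same_set P (conv (ptset V0)) /\
    forall V', same_set P (conv (ptset V')) -> (length V0 <= length V')%nat.
Proof.
  remember (length V) as n. revert V Heqn.
  induction n as [n IH] using (well_founded_induction Wf_nat.lt_wf).
  intros V Hn HV.
  destruct (classic (exists V', same_set P (conv (ptset V')) /\ (length V' < length V)%nat)) as [[V' [H1 H2]]|N].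
  - apply (IH (length V')) with V'; auto. lia.
  - exists V. split; auto. intros V' H'. apply NNPP. intro X. apply N. exists V'. split; auto. lia.
Qed.

Lemma vertex_same (A B : region) r : same_set A B -> vertex B r -> vertex A r.
Proof.
  intros H [Hr Hv]. split; [apply H; auto|]. intros a b t Ha Hb. apply Hv; apply H; auto.
Qed.

Lemma minimal_vertices (P : region) V0 : same_set P (conv (ptset V0)) ->
  (forall V', same_set P (conv (ptset V')) -> (length V0 <= length V')%nat) ->
  forall z, In z V0 -> vertex P (emb z).
Proof.
  intros HV Hmin z Hz. apply NNPP; intro Nv.
  assert (Nv' : ~ vertex (conv (ptset V0)) (emb z)).
  { intro X. apply Nv. apply (vertex_same _ _ _ HV X). }
  assert (Hzin : conv (ptset V0) (emb z)) by (apply conv_incl; exists z; auto).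
  pose proof (nonvertex_in _ _ Hzin Nv') as Hc.
  assert (Hc' : conv (ptset (rem V0 z)) (emb z)).
  { apply (conv_mono (fun q => ptset V0 q /\ q <> emb z)); auto. intros q Hq. apply ptset_rem; auto. }
  assert (Hs : same_set P (conv (ptset (rem V0 z)))).
  { intros q. rewrite (HV q). split.
    - intros Hq. apply conv_conv. apply (conv_mono (ptset V0)); auto.
      intros s Hs. destruct (classic (s = emb z)) as [E|E].
      + subst; auto.
      + apply conv_incl. apply ptset_rem; auto.
    - apply conv_mono. intros s Hs. apply ptset_rem in Hs. tauto. }
  specialize (Hmin _ Hs). pose proof (length_rem V0 z Hz). lia.
Qed.

Definition zsumabs (V : list pt) : Z :=
  fold_right (fun z acc => Z.abs (z1 z) + Z.abs (z2 z) + Z.abs (z3 z) + acc)%Z 0%Z V.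

Lemma elem_bound V z : In z V ->
  (Z.abs (z1 z) <= zsumabs V /\ Z.abs (z2 z) <= zsumabs V /\ Z.abs (z3 z) <= zsumabs V)%Z.
Proof.
  induction V as [|a V IH]; simpl; [tauto|]. intros [E|H].
  - subst. assert (0 <= zsumabs V)%Z.
    { clear. induction V; simpl; lia. }
    lia.
  - destruct (IH H). lia.
Qed.

Lemma Rabs_IZR k : Rabs (IZR k) = IZR (Z.abs k).
Proof.
  destruct (Z_le_gt_dec 0 k).
  - rewrite Rabs_right by (apply Rle_ge, IZR_le; auto). f_equal; lia.
  - rewrite Rabs_left by (apply IZR_lt; lia). rewrite <- opp_IZR. f_equal; lia.
Qed.

Lemma conv_bound V p : conv (ptset V) p ->
  Rabs (c1 p) <= IZR (zsumabs V) /\ Rabs (c2 p) <= IZR (zsumabs V) /\ Rabs (c3 p) <= IZR (zsumabs V).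
Proof.
  intros [l [F [W C]]]. subst p.
  set (M := IZR (zsumabs V)).
  assert (forall l : list (R*vec3), Forall (fun wq => 0 <= fst wq /\ ptset V (snd wq)) l ->
     Rabs (c1 (csum l)) <= M * wsum l /\ Rabs (c2 (csum l)) <= M * wsum l /\ Rabs (c3 (csum l)) <= M * wsum l) as G.
  { clear -M. intros l. induction l as [|[w s] l IH]; intros F.
    - simpl. rewrite Rabs_R0. lra.
    - inversion F as [|? ? [Hw [z [Hz Es]]] Fl]; subst. simpl in Hw. destruct (IH Fl) as [A [B C]].
      destruct (elem_bound V z Hz) as [X [Y Z]].
      apply IZR_le in X, Y, Z. rewrite <- !Rabs_IZR in X, Y, Z. fold M in X, Y, Z.
      simpl.
      assert (forall k r, Rabs k <= M -> Rabs r <= M * wsum l ->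
                Rabs (w * k + r) <= M * (w + wsum l)) as T.
      { intros k r Hk Hr. eapply Rle_trans. apply Rabs_triang. rewrite Rabs_mult, (Rabs_right w) by lra.
        assert (w * Rabs k <= w * M) by (apply Rmult_le_compat_l; lra). lra. }
      simpl in Es; subst s; repeat split; apply T; auto. }
  destruct (G l F) as [A [B D]]. rewrite W, Rmult_1_r in A, B, D. auto.
Qed.

Definition zr (M : Z) : list Z := map (fun n => Z.of_nat n - M)%Z (seq 0 (Z.to_nat (2*M+1))).

Lemma In_zr M k : (- M <= k <= M)%Z -> In k (zr M).
Proof.
  intros H. unfold zr. apply in_map_iff. exists (Z.to_nat (k + M)). split.
  - rewrite Z2Nat.id by lia. lia.
  - apply in_seq. lia.
Qed.

Definition box (M : Z) : list pt :=
  flat_map (fun a => flat_map (fun b => map (fun c => P3 a b c) (zr M)) (zr M)) (zr M).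

Lemma In_box M z : (Z.abs (z1 z) <= M /\ Z.abs (z2 z) <= M /\ Z.abs (z3 z) <= M)%Z -> In z (box M).
Proof.
  intros [A [B C]]. destruct z as [a b c]. simpl in *. unfold box.
  apply in_flat_map. exists a. split. apply In_zr; lia.
  apply in_flat_map. exists b. split. apply In_zr; lia.
  apply in_map_iff. exists c. split; auto. apply In_zr; lia.
Qed.

Lemma cfilter (A : pt -> Prop) (l : list pt) : exists W, forall z, In z W <-> In z l /\ A z.
Proof.
  induction l as [|a l [W HW]].
  - exists nil. simpl. tauto.
  - destruct (classic (A a)).
    + exists (a :: W). intros z. simpl. rewrite HW. split; [intros [E|E]; subst; tauto|tauto].
    + exists W. intros z. simpl. rewrite HW. split; [tauto|]. intros [[E|E] F]; subst; tauto.
Qed.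

Lemma removal_polytope (P : region) V r : same_set P (conv (ptset V)) ->
  lattice_polytope (conv (fun q => P q /\ latt q /\ q <> r)).
Proof.
  intros HV. destruct (cfilter (fun z => P (emb z) /\ emb z <> r) (box (zsumabs V))) as [W HW].
  exists W. apply conv_ext. intros q. split.
  - intros [HP [[z E] Hr]]. subst q. exists z. split; auto. apply HW. split; auto.
    apply In_box. apply HV in HP. destruct (conv_bound V _ HP) as [A [B C]].
    unfold emb in A, B, C; simpl in A, B, C. rewrite Rabs_IZR in A, B, C.
    apply le_IZR in A, B, C. auto.
  - intros [z [Hz E]]. subst q. apply HW in Hz. destruct Hz as [_ [H1 H2]].
    split; auto. split; auto. exists z; auto.
Qed.

Lemma rel_cast (m1 m2 m3 m4 m5 x1 x2 x3 x4 x5 : Z) :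
  (m1*x1 + m2*x2 + m3*x3 + m4*x4 + m5*x5 = 0)%Z ->
  IZR m1 * IZR x1 + IZR m2 * IZR x2 + IZR m3 * IZR x3 + IZR m4 * IZR x4 + IZR m5 * IZR x5 = 0.
Proof. intros H. rewrite <- !mult_IZR, <- !plus_IZR, H. reflexivity. Qed.

Lemma zdet3_comb u v z m n h : zdet3 u v (zadd (zlin m u n v) (zscale h z)) = (h * zdet3 u v z)%Z.
Proof. unfold zdet3, zlin; simpl; ring. Qed.

Definition wpt (u v : pt) : pt := zadd (zscale (-2) u) (zopp v).

Lemma fano_removal (P : region) V r u v z0 a b A1 A2 ha B1 B2 hb :
  same_set P (conv (ptset V)) -> fano P -> zdet3 u v z0 = 1%Z -> (0 < ha)%Z -> (0 < hb)%Z ->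
  a = zadd (zlin A1 u A2 v) (zscale ha z0) -> b = zadd (zlin B1 u B2 v) (zscale (-hb) z0) ->
  P (emb u) -> P (emb v) -> P (emb (wpt u v)) -> P (emb a) -> P (emb b) ->
  emb u <> r -> emb v <> r -> emb (wpt u v) <> r -> emb a <> r -> emb b <> r ->
  fano (conv (fun q => P q /\ latt q /\ q <> r)).
Proof.
  intros HV HF Hz Hha Hhb Ea Eb Pu Pv Pw Pa Pb Nu Nv Nw Na Nb.
  set (F := fun q => P q /\ latt q /\ q <> r).
  assert (HFin : forall z, P (emb z) -> emb z <> r -> conv F (emb z)).
  { intros z H1 H2. apply conv_incl. split; auto. split; auto. exists z; auto. }
  assert (Hsub : subset (conv F) P).
  { intros q Hq. apply HV. apply conv_conv. apply (conv_mono F); auto.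
    intros s [Hs _]. apply HV. auto. }
  assert (Hint : interior (conv F) vzero).
  { set (al := (hb * A1 + ha * B1)%Z). set (be := (hb * A2 + ha * B2)%Z).
    set (K := (1 + Z.abs al + Z.abs be)%Z).
    apply (G5 (conv F) (conv_conv F) (emb u) (emb v) (emb a) (emb b) (emb (wpt u v))
             (IZR (2*K - al)) (IZR (K - be)) (IZR hb) (IZR ha) (IZR K)); auto;
      try (apply IZR_lt; unfold K; lia);
      try (cbn [c1 c2 c3 emb]; apply rel_cast; subst a b; unfold wpt, zlin, zopp; cbn [z1 z2 z3 zadd zscale]; unfold K, al, be; ring).
    rewrite rdet_emb. subst a. rewrite zdet3_comb, Hz. apply not_0_IZR. lia. }
  split; [apply (removal_polytope P V r HV)|].
  split; [exists vzero; auto|]. split; auto.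
  intros p Hl Hi. destruct HF as [_ [_ [_ HF]]]. apply HF; auto.
  destruct Hi as [e [He Hi]]. exists e. split; auto.
Qed.

Lemma rdet_lin p q w s r : rdet p q (vadd (vscale w s) r) = w * rdet p q s + rdet p q r.
Proof. unfold rdet; simpl; ring. Qed.

Lemma max_unique p q (S : region) M r :
  (forall s, S s -> rdet p q s <= M) -> (forall s, S s -> rdet p q s = M -> s = r) ->
  forall x, conv S x -> rdet p q x <= M /\ (rdet p q x = M -> x = r).
Proof.
  intros H1 H2 x [l [F [W C]]]. subst x.
  assert (G : forall l : list (R*vec3), Forall (fun wq => 0 <= fst wq /\ S (snd wq)) l ->
     rdet p q (csum l) <= M * wsum l /\ (rdet p q (csum l) = M * wsum l -> csum l = vscale (wsum l) r)).
  { clear W F l. intros l. induction l as [|[w s] l IH]; intros F.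
    - simpl. split. unfold rdet; simpl; lra. intros _. veq; ring.
    - inversion F as [|? ? [Hw Hs] Fl]; subst. simpl in Hw, Hs. destruct (IH Fl) as [A B].
      simpl. rewrite rdet_lin. pose proof (H1 s Hs).
      assert (w * rdet p q s <= w * M) by (apply Rmult_le_compat_l; lra).
      split. lra. intros E.
      assert (E1 : rdet p q (csum l) = M * wsum l) by lra.
      assert (E2 : w * rdet p q s = w * M) by lra.
      rewrite (B E1). destruct (Req_dec w 0) as [Z|NZ].
      + subst w. veq; ring.
      + assert (rdet p q s = M) by (apply (Rmult_eq_reg_l w); lra).
        rewrite (H2 s Hs H3). veq; ring. }
  destruct (G l F) as [A B]. rewrite W in A, B. split. lra. intros E. rewrite B by lra. veq; ring.
Qed.

Lemma vertex_max p q (S : region) M r : S r -> rdet p q r = M ->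
  (forall s, S s -> rdet p q s <= M) -> (forall s, S s -> rdet p q s = M -> s = r) ->
  vertex (conv S) r.
Proof.
  intros Hr Hm H1 H2. split; [apply conv_incl; auto|].
  intros a b t Ha Hb Ht E.
  destruct (max_unique p q S M r H1 H2 a Ha) as [A1 A2].
  destruct (max_unique p q S M r H1 H2 b Hb) as [B1 B2].
  assert (rdet p q r = t * rdet p q a + (1-t) * rdet p q b) by (rewrite E at 1; unfold rdet; simpl; ring).
  assert (t * rdet p q a <= t * M) by (apply Rmult_le_compat_l; lra).
  assert ((1-t) * rdet p q b <= (1-t) * M) by (apply Rmult_le_compat_l; lra).
  assert (t * rdet p q a = t * M) by lra.
  assert ((1-t) * rdet p q b = (1-t) * M) by lra.
  split; [apply A2; apply (Rmult_eq_reg_l t) | apply B2; apply (Rmult_eq_reg_l (1-t))]; lra.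
Qed.

Definition Qset u v x := ptset (u :: v :: wpt u v :: x :: zopp x :: nil).

Lemma inQ u v x y lx lm lu lv ln :
  0 <= lx -> 0 <= lm -> 0 <= lu -> 0 <= lv -> 0 <= ln -> lx + lm + lu + lv + ln <= 1 ->
  IZR (z1 y) = lx * IZR (z1 x) - lm * IZR (z1 x) + lu * IZR (z1 u) + lv * IZR (z1 v) - ln * IZR (z1 u) ->
  IZR (z2 y) = lx * IZR (z2 x) - lm * IZR (z2 x) + lu * IZR (z2 u) + lv * IZR (z2 v) - ln * IZR (z2 u) ->
  IZR (z3 y) = lx * IZR (z3 x) - lm * IZR (z3 x) + lu * IZR (z3 u) + lv * IZR (z3 v) - ln * IZR (z3 u) ->
  conv (Qset u v x) (emb y).
Proof.
  intros. set (l0 := 1 - (lx + lm + lu + lv + ln)).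
  apply (conv5 _ (emb u) (emb v) (emb (wpt u v)) (emb x) (emb (zopp x))
     lu (lv + ln/2) (ln/2) (lx + l0/2) (lm + l0/2)); try (unfold l0; lra).
  exists u; simpl; tauto. exists v; simpl; tauto. exists (wpt u v); simpl; tauto.
  exists x; simpl; tauto. exists (zopp x); simpl; tauto.
  all: unfold emb, wpt, zopp; cbn [c1 c2 c3 z1 z2 z3 zadd zscale]; zcast; unfold l0; lra.
Qed.

Lemma ptset_same L1 L2 : (forall z, In z L1 <-> In z L2) -> same_set (ptset L1) (ptset L2).
Proof. intros H q. unfold ptset. split; intros [z [Hz E]]; exists z; split; auto; apply H; auto. Qed.

Lemma normalize u v z0 x a0 b0 D : (0 < D)%Z -> zdet3 u v z0 = 1%Z ->
  x = zadd (zlin a0 u b0 v) (zscale D z0) ->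
  exists z0' a b, zdet3 u v z0' = 1%Z /\ x = zadd (zlin a u b v) (zscale D z0') /\
    (0 <= a < D)%Z /\ (0 <= b < D)%Z.
Proof.
  intros HD Hz Ex.
  exists (zadd z0 (zlin (a0 / D) u (b0 / D) v)), (a0 mod D)%Z, (b0 mod D)%Z.
  pose proof (Z.div_mod a0 D ltac:(lia)) as Ea. pose proof (Z.div_mod b0 D ltac:(lia)) as Eb.
  pose proof (Z.mod_pos_bound a0 D HD). pose proof (Z.mod_pos_bound b0 D HD).
  split; [|split; [|split; lia]].
  - rewrite <- Hz. unfold zdet3, zlin; cbn [z1 z2 z3 zadd zscale zlin zopp wpt]; ring.
  - rewrite Ex. unfold zlin. apply pt_ext; cbn [z1 z2 z3 zadd zscale zlin zopp wpt]; rewrite Ea at 1; rewrite Eb at 1; ring.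
Qed.

Lemma frac_le1 n d : 0 < d -> n <= d -> n / d <= 1.
Proof. intros. apply (Rmult_le_reg_r d); auto. unfold Rdiv. rewrite Rmult_assoc, Rinv_l by lra. lra. Qed.

Lemma frac_nonneg n d : 0 < d -> 0 <= n -> 0 <= n / d.
Proof. intros. unfold Rdiv. apply Rmult_le_pos; auto. left; apply Rinv_0_lt_compat; auto. Qed.

Lemma zdet3_u u v : zdet3 u v u = 0%Z. Proof. unfold zdet3; ring. Qed.
Lemma zdet3_v u v : zdet3 u v v = 0%Z. Proof. unfold zdet3; ring. Qed.
Lemma zdet3_w u v : zdet3 u v (wpt u v) = 0%Z. Proof. unfold zdet3, wpt, zopp; cbn [z1 z2 z3 zadd zscale zlin zopp wpt]; ring. Qed.
Lemma zdet3_opp u v x : zdet3 u v (zopp x) = (- zdet3 u v x)%Z. Proof. unfold zdet3, zopp; cbn [z1 z2 z3 zadd zscale zlin zopp wpt]; ring. Qed.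
Lemma zdet3_swap u v s : zdet3 v u s = (- zdet3 u v s)%Z. Proof. unfold zdet3; ring. Qed.

Ltac ptring := apply pt_ext; cbn [z1 z2 z3 zadd zscale zlin zopp wpt zapply m11 m12 m13 m21 m22 m23 m31 m32 m33]; ring.

Lemma main_pos (u v x : pt) (P : region) :
  basis_of_sublattice u v -> (0 < zdet3 u v x)%Z -> minimal_fano P ->
  subset (conv (ptset (u :: v :: zadd (zscale (-2) u) (zopp v) :: nil))) P ->
  P (emb x) -> P (emb (zopp x)) ->
  exists A : zmat, in_GL3Z A /\
    (same_set P (conv (ptset (map (zapply A) cols1))) \/
     same_set P (conv (ptset (map (zapply A) cols2)))).
Proof.
  intros Hb HD Hmin HT Px Pmx.
  remember (zdet3 u v x) as D eqn:HDdef.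
  destruct (z0_exists u v Hb) as [z0 Hz0].
  destruct (coords u v z0 x Hb Hz0) as [a0 [b0 Ex]]. rewrite <- HDdef in Ex.
  pose proof (proj1 Hmin) as HF. destruct HF as [[V HV] _].
  assert (Pu : P (emb u)) by (apply HT; apply conv_incl; exists u; simpl; tauto).
  assert (Pv : P (emb v)) by (apply HT; apply conv_incl; exists v; simpl; tauto).
  assert (Pw : P (emb (wpt u v))) by (apply HT; apply conv_incl; exists (wpt u v); simpl; tauto).
  assert (HQP : subset (conv (Qset u v x)) P).
  { intros q Hq. apply HV. apply conv_conv. apply (conv_mono (Qset u v x)); auto.
    intros s [z [Hz E]]; subst s. apply HV. simpl in Hz.
    destruct Hz as [<-|[<-|[<-|[<-|[<-|[]]]]]]; auto. }
  assert (Du : zdet3 u v u = 0%Z) by apply zdet3_u.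
  assert (Dv : zdet3 u v v = 0%Z) by apply zdet3_v.
  assert (Dw : zdet3 u v (wpt u v) = 0%Z) by apply zdet3_w.
  assert (Dmx : zdet3 u v (zopp x) = (- D)%Z) by (rewrite zdet3_opp; congruence).
  assert (HPQ : subset P (conv (Qset u v x))).
  { destruct (min_list P V HV) as [V0 [HV0 Hmin0]].
    intros q Hq. apply HV0 in Hq. revert Hq. apply conv_mono. intros s [z [Hz E]]; subst s.
    pose proof (minimal_vertices P V0 HV0 Hmin0 z Hz) as Hvz.
    apply NNPP; intro Nz.
    apply (proj2 Hmin (emb z) Hvz).
    apply (fano_removal P V (emb z) u v z0 x (zopp x) a0 b0 D (-a0) (-b0) D); auto.
    - apply Hmin.
    - rewrite Ex. ptring.
    - intro E; apply Nz; rewrite <- E; exists u; simpl; tauto.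
    - intro E; apply Nz; rewrite <- E; exists v; simpl; tauto.
    - intro E; apply Nz; rewrite <- E; exists (wpt u v); simpl; tauto.
    - intro E; apply Nz; rewrite <- E; exists x; simpl; tauto.
    - intro E; apply Nz; rewrite <- E; exists (zopp x); simpl; tauto. }
  assert (HPeq : same_set P (conv (Qset u v x))) by (intros q; split; [apply HPQ|apply HQP]).
  assert (Qmem : forall s, Qset u v x s -> s = emb u \/ s = emb v \/ s = emb (wpt u v) \/ s = emb x \/ s = emb (zopp x)).
  { intros s [z [Hz E]]; subst s. simpl in Hz. destruct Hz as [<-|[<-|[<-|[<-|[<-|[]]]]]]; tauto. }
  assert (HDr : 0 < IZR D) by (apply IZR_lt; auto).
  assert (Vx : vertex P (emb x)).
  { apply (vertex_same _ _ _ HPeq). apply (vertex_max (emb u) (emb v) _ (IZR D)).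
    - exists x; simpl; tauto.
    - rewrite rdet_emb; congruence.
    - intros s Hs. destruct (Qmem s Hs) as [E|[E|[E|[E|E]]]]; subst s; rewrite rdet_emb;
        [rewrite Du|rewrite Dv|rewrite Dw|rewrite <- HDdef|rewrite Dmx]; try lra.
      rewrite opp_IZR; lra.
    - intros s Hs Hm. destruct (Qmem s Hs) as [E|[E|[E|[E|E]]]]; subst s; rewrite rdet_emb in Hm;
        [rewrite Du in Hm|rewrite Dv in Hm|rewrite Dw in Hm|auto|rewrite Dmx in Hm]; 
        apply eq_IZR in Hm; lia. }
  assert (Vmx : vertex P (emb (zopp x))).
  { apply (vertex_same _ _ _ HPeq). apply (vertex_max (emb v) (emb u) _ (IZR D)).
    - exists (zopp x); simpl; tauto.
    - rewrite rdet_emb, zdet3_swap, Dmx. f_equal; lia.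
    - intros s Hs. destruct (Qmem s Hs) as [E|[E|[E|[E|E]]]]; subst s; rewrite rdet_emb, zdet3_swap;
        [rewrite Du|rewrite Dv|rewrite Dw|rewrite <- HDdef|rewrite Dmx]; rewrite opp_IZR; try lra.
      rewrite opp_IZR; lra.
    - intros s Hs Hm. destruct (Qmem s Hs) as [E|[E|[E|[E|E]]]]; subst s; rewrite rdet_emb, zdet3_swap in Hm;
        [rewrite Du in Hm|rewrite Dv in Hm|rewrite Dw in Hm|rewrite <- HDdef in Hm|auto];
        apply eq_IZR in Hm; lia. }
  destruct (Z.eq_dec D 1) as [D1|D2].
  {
    exists (ZM (z1 u) (z1 v) (z1 x) (z2 u) (z2 v) (z2 x) (z3 u) (z3 v) (z3 x)). split.
    - left. unfold zdet. cbn [m11 m12 m13 m21 m22 m23 m31 m32 m33].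
      rewrite <- D1, HDdef. unfold zdet3. ring.
    - left. intros q. rewrite (HPeq q). apply conv_ext. apply ptset_same. intros z.
      assert (Hm : map (zapply (ZM (z1 u) (z1 v) (z1 x) (z2 u) (z2 v) (z2 x) (z3 u) (z3 v) (z3 x))) cols1
                 = u :: v :: x :: zopp x :: wpt u v :: nil).
      { unfold cols1; cbn [map]. repeat (match goal with |- cons _ _ = cons _ _ => f_equal; try ptring end). }
      rewrite Hm. simpl. tauto. }
  assert (HD2 : (2 <= D)%Z) by lia.
  destruct (normalize u v z0 x a0 b0 D HD Hz0 Ex) as [z [a [b [Hz [Ex' [Ha Hbr]]]]]].
  clear Ex.
  assert (Dx : zdet3 u v x = D) by auto.
  assert (remx : forall y A1 A2 h, y = zadd (zlin A1 u A2 v) (zscale h z) -> (0 < h < D)%Z -> P (emb y) -> False).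
  { intros y A1 A2 h Hy Hh Py. apply (proj2 Hmin (emb x) Vx).
    apply (fano_removal P V (emb x) u v z y (zopp x) A1 A2 h (-a) (-b) D); auto; try lia.
    - apply Hmin.
    - rewrite Ex'. ptring.
    - apply (emb_neq_det u v). rewrite Du, Dx. lia.
    - apply (emb_neq_det u v). rewrite Dv, Dx. lia.
    - apply (emb_neq_det u v). rewrite Dw, Dx. lia.
    - apply (emb_neq_det u v). rewrite Hy, zdet3_comb, Hz, Dx. lia.
    - apply (emb_neq_det u v). rewrite Dmx, Dx. lia. }
  assert (remmx : forall y A1 A2 h, y = zadd (zlin A1 u A2 v) (zscale (-h) z) -> (0 < h < D)%Z -> P (emb y) -> False).
  { intros y A1 A2 h Hy Hh Py. apply (proj2 Hmin (emb (zopp x)) Vmx).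
    apply (fano_removal P V (emb (zopp x)) u v z x y a b D A1 A2 h); auto; try lia.
    - apply Hmin.
    - apply (emb_neq_det u v). rewrite Du, Dmx. lia.
    - apply (emb_neq_det u v). rewrite Dv, Dmx. lia.
    - apply (emb_neq_det u v). rewrite Dw, Dmx. lia.
    - apply (emb_neq_det u v). rewrite Dx, Dmx. lia.
    - apply (emb_neq_det u v). rewrite Hy, zdet3_comb, Hz, Dmx. lia. }
  assert (Har : 0 <= IZR a) by (apply IZR_le; lia).
  assert (Hbr' : 0 <= IZR b) by (apply IZR_le; lia).
  assert (HaD : IZR a <= IZR D) by (apply IZR_le; lia).
  assert (HbD : IZR b <= IZR D) by (apply IZR_le; lia).
  assert (HDne : IZR D <> 0) by lra.
  destruct (Z_lt_ge_dec (a+b) D) as [C5|G].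
  { exfalso. apply (remmx (zadd (zlin 0 u 0 v) (zscale (-1) z)) 0%Z 0%Z 1%Z); [reflexivity| lia |].
    assert (H1 : (a + b + 1 <= D)%Z) by lia. apply IZR_le in H1. rewrite !plus_IZR in H1.
    apply HQP. apply (inQ u v x _ 0 (1/IZR D) (IZR a/IZR D) (IZR b/IZR D) 0);
      try lra; try (apply frac_nonneg; lra).
    - match goal with |- ?L <= 1 => replace L with ((1 + IZR a + IZR b)/IZR D) by (field; lra) end.
      apply frac_le1; lra.
    - rewrite Ex'; cbn [z1 z2 z3 zadd zscale zlin]; zcast; field; lra.
    - rewrite Ex'; cbn [z1 z2 z3 zadd zscale zlin]; zcast; field; lra.
    - rewrite Ex'; cbn [z1 z2 z3 zadd zscale zlin]; zcast; field; lra. }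
  destruct (Z.eq_dec (a+b) D) as [E6|C4].
  2:{ exfalso. apply (remx (zadd (zlin 1 u 1 v) (zscale 1 z)) 1%Z 1%Z 1%Z); [reflexivity| lia |].
    assert (H1 : (D + 1 <= a + b)%Z) by lia. apply IZR_le in H1. rewrite !plus_IZR in H1.
    apply HQP. apply (inQ u v x _ (1/IZR D) 0 ((IZR D - IZR a)/IZR D) ((IZR D - IZR b)/IZR D) 0);
      try lra; try (apply frac_nonneg; lra).
    - match goal with |- ?L <= 1 => replace L with ((1 + 2 * IZR D - IZR a - IZR b)/IZR D) by (field; lra) end.
      apply frac_le1; lra.
    - rewrite Ex'; cbn [z1 z2 z3 zadd zscale zlin]; zcast; field; lra.
    - rewrite Ex'; cbn [z1 z2 z3 zadd zscale zlin]; zcast; field; lra.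
    - rewrite Ex'; cbn [z1 z2 z3 zadd zscale zlin]; zcast; field; lra. }
  assert (Eb : b = (D - a)%Z) by lia. subst b.
  destruct (Z_lt_ge_dec (2*a) D) as [A6|A6'].
  { exfalso. apply (remx (zadd (zlin 0 u 1 v) (zscale 1 z)) 0%Z 1%Z 1%Z); [reflexivity| lia |].
    assert (H1 : (2 * a + 1 <= D)%Z) by lia. apply IZR_le in H1. rewrite !plus_IZR, mult_IZR in H1.
    apply HQP. apply (inQ u v x _ (1/IZR D) 0 0 (IZR a/IZR D) (IZR a/IZR D));
      try lra; try (apply frac_nonneg; lra).
    - match goal with |- ?L <= 1 => replace L with ((1 + 2 * IZR a)/IZR D) by (field; lra) end.
      apply frac_le1; lra.
    - rewrite Ex'; cbn [z1 z2 z3 zadd zscale zlin]; zcast; field; lra.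
    - rewrite Ex'; cbn [z1 z2 z3 zadd zscale zlin]; zcast; field; lra.
    - rewrite Ex'; cbn [z1 z2 z3 zadd zscale zlin]; zcast; field; lra. }
  destruct (Z.eq_dec (2*a) D) as [A2|A3].
  2:{ exfalso. apply (remmx (zadd (zlin (-1) u 0 v) (zscale (-1) z)) (-1)%Z 0%Z 1%Z); [reflexivity| lia |].
    assert (H1 : (D + 1 <= 2 * a)%Z) by lia. apply IZR_le in H1. rewrite !plus_IZR, mult_IZR in H1.
    apply HQP. apply (inQ u v x _ 0 (1/IZR D) 0 ((IZR D - IZR a)/IZR D) ((IZR D - IZR a)/IZR D));
      try lra; try (apply frac_nonneg; lra).
    - match goal with |- ?L <= 1 => replace L with ((1 + 2 * IZR D - 2 * IZR a)/IZR D) by (field; lra) end.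
      apply frac_le1; lra.
    - rewrite Ex'; cbn [z1 z2 z3 zadd zscale zlin]; zcast; field; lra.
    - rewrite Ex'; cbn [z1 z2 z3 zadd zscale zlin]; zcast; field; lra.
    - rewrite Ex'; cbn [z1 z2 z3 zadd zscale zlin]; zcast; field; lra. }
  destruct (Z.eq_dec D 2) as [D2'|D4].
  2:{ exfalso. apply (remx (zadd (zlin 1 u 1 v) (zscale 2 z)) 1%Z 1%Z 2%Z); [reflexivity| lia |].
    assert (Hapos : 0 < IZR a) by (apply IZR_lt; lia).
    apply HQP. apply (inQ u v x _ (2/IZR D) 0 0 0 0);
      try lra; try (apply frac_nonneg; lra).
    - match goal with |- ?L <= 1 => replace L with (2/IZR D) by (field; lra) end.
      apply frac_le1; try lra. apply IZR_le; lia.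
    - rewrite Ex'; cbn [z1 z2 z3 zadd zscale zlin]. rewrite <- A2. zcast; field; lra.
    - rewrite Ex'; cbn [z1 z2 z3 zadd zscale zlin]. rewrite <- A2. zcast; field; lra.
    - rewrite Ex'; cbn [z1 z2 z3 zadd zscale zlin]. rewrite <- A2. zcast; field; lra. }
  assert (a = 1%Z) by lia. subst a. rewrite D2' in Ex'.
  exists (ZM (z1 u) (z1 v) (z1 z) (z2 u) (z2 v) (z2 z) (z3 u) (z3 v) (z3 z)). split.
  - left. unfold zdet. cbn [m11 m12 m13 m21 m22 m23 m31 m32 m33].
    rewrite <- Hz. unfold zdet3. ring.
  - right. intros q. rewrite (HPeq q). apply conv_ext. apply ptset_same. intros y.
    assert (Hm : map (zapply (ZM (z1 u) (z1 v) (z1 z) (z2 u) (z2 v) (z2 z) (z3 u) (z3 v) (z3 z))) cols2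
                 = u :: v :: wpt u v :: x :: zopp x :: nil).
    { rewrite Ex'. unfold cols2; cbn [map]. repeat (match goal with |- cons _ _ = cons _ _ => f_equal; try ptring end). }
    rewrite Hm. simpl. tauto.
Qed.

Theorem lemma4p10 (u v x : pt) (P : region) :
  basis_of_sublattice u v ->
  ~ inspan (emb u) (emb v) (emb x) ->
  minimal_fano P ->
  subset (conv (ptset (u :: v :: zadd (zscale (-2) u) (zopp v) :: nil))) P ->
  P (emb x) -> P (emb (zopp x)) ->
  exists A : zmat, in_GL3Z A /\
    (same_set P (conv (ptset (map (zapply A) cols1))) \/
     same_set P (conv (ptset (map (zapply A) cols2)))).
Proof.
  intros Hb Hns Hmin HT Px Pmx.
  destruct (Z.lt_trichotomy (zdet3 u v x) 0) as [Neg|[Zer|Pos]].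
  - assert (E : zopp (zopp x) = x) by ptring.
    apply (main_pos u v (zopp x) P Hb); auto.
    + rewrite zdet3_opp. lia.
    + rewrite E; auto.
  - exfalso. apply Hns. destruct (span_from_det0 u v x Hb Zer) as [m [n E]].
    exists (IZR m), (IZR n). rewrite E. unfold emb, zlin; veq; zcast; ring.
  - apply (main_pos u v x P Hb); auto.
Qed.
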